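(* Let $\phi$ be 1-Lipschitz with $|\phi''|\le H$, $R=R_{\max}/R_{\min}$, and consider one gradient descent step $W^{(t+1)}=W^{(t)}-\alpha\nabla\hat L(W^{(t)})$ on the logistic loss. Suppose that at time $t$ near-orthogonality of gradients holds with constant $C'\ge25R^2/c+25$, i.e. $\|\nabla f(x_i;W^{(t)})\|_F^2\ge C'n\max_{k\ne i}|\langle\nabla f(x_i;W^{(t)}),\nabla f(x_k;W^{(t)})\rangle|$ for all $i$, and gradient persistence holds with constant $c>0$, i.e. $\|\nabla f(x_i;W^{(t)})\|_F^2\ge c\|x_i\|^2$ for all $i$. If $\alpha\le[5HR_{\max}^2n(10R^2/c+10)]^{-1}$, then for all $i,j\in[n]$, $$\frac{e^{-y_if(x_i;W^{(t+1)})}}{e^{-y_jf(x_j;W^{(t+1)})}}\le\frac{e^{-y_if(x_i;W^{(t)})}}{e^{-y_jf(x_j;W^{(t)})}}\cdot\exp\!\left(-\frac{g_j^{(t)}\alpha cR_{\min}^2}{n}\Big(\frac{g_i^{(t)}}{g_j^{(t)}}-\frac{R^2}{c}\Big)\right)\cdot\exp\!\left(\frac{\alpha R_{\max}^2}{(10R^2/c+10)n}\hat G(W^{(t)})\right).$$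
   Context: $f(x;W)=\sum_{j=1}^ma_j\phi(\langle w_j,x\rangle)$ with $a_j\in\{\pm1/\sqrt m\}$, gradients with respect to $W$. Logistic loss $\ell(z)=\log(1+e^{-z})$, $\hat L(W)=\frac1n\sum_i\ell(y_if(x_i;W))$. Sigmoid loss $g(z)=-\ell'(z)=1/(1+e^z)$, $g_i^{(t)}=g(y_if(x_i;W^{(t)}))$, $\hat G(W)=\frac1n\sum_ig(y_if(x_i;W))$. $R_{\max}=\max_i\|x_i\|$, $R_{\min}=\min_i\|x_i\|$. *)

(* Defs.v *)
From HB Require Import structures.
From mathcomp Require Import all_boot all_order all_algebra.
From mathcomp Require Import all_classical all_reals all_analysis.
Set Implicit Arguments. Unset Strict Implicit. Unset Printing Implicit Defensive.
Import Order.TTheory GRing.Theory Num.Theory.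
Import numFieldNormedType.Exports.
Local Open Scope ring_scope.

Section Defs.
Variables (R : realType) (n m d : nat).

Definition dotv (u v : 'I_d -> R) : R := \sum_(k < d) u k * v k.
Definition vnorm (u : 'I_d -> R) : R := Num.sqrt (dotv u u).

Definition netf (a : 'I_m -> R) (phi : R -> R) (W : 'M[R]_(m, d))
  (x : 'I_d -> R) : R :=
  \sum_(j < m) a j * phi (dotv (fun k => W j k) x).

(* Gradient of f(x;W) w.r.t. W, given phi' the derivative of phi:
   d f / d W_{jk} = a_j phi'(<w_j,x>) x_k *)
Definition gradf (a : 'I_m -> R) (phi' : R -> R) (W : 'M[R]_(m, d))
  (x : 'I_d -> R) : 'M[R]_(m, d) :=
  \matrix_(j < m, k < d) (a j * phi' (dotv (fun l => W j l) x) * x k).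

Definition frob (A B : 'M[R]_(m, d)) : R :=
  \sum_(j < m) \sum_(k < d) A j k * B j k.

(* sigmoid loss g(z) = -l'(z) = 1/(1+e^z) *)
Definition gsig (z : R) : R := (1 + expR z)^-1.

Definition Rmaxx (x : 'I_n -> 'I_d -> R) : R :=
  \big[Num.max/0]_(i < n) vnorm (x i).
(* minimum over i (n >= 1 is assumed where used) *)
Definition Rminx (x : 'I_n -> 'I_d -> R) : R :=
  \big[Num.min/Rmaxx x]_(i < n) vnorm (x i).

Definition Ghat (a : 'I_m -> R) (phi : R -> R) (x : 'I_n -> 'I_d -> R)
  (y : 'I_n -> R) (W : 'M[R]_(m, d)) : R :=
  n%:R^-1 * \sum_(i < n) gsig (y i * netf a phi W (x i)).

(* One GD step on the logistic loss:
   grad Lhat(W) = (1/n) sum_i l'(y_i f_i) y_i grad f_i = -(1/n) sum_i g_i y_i grad f_i *)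
Definition gd_step (a : 'I_m -> R) (phi phi' : R -> R) (x : 'I_n -> 'I_d -> R)
  (y : 'I_n -> R) (alpha : R) (W : 'M[R]_(m, d)) : 'M[R]_(m, d) :=
  W + (alpha / n%:R) *:
      \sum_(i < n) (gsig (y i * netf a phi W (x i)) * y i) *: gradf a phi' W (x i).

End Defs.

(* Main.v *)
Require Import Defs.
From HB Require Import structures.
From mathcomp Require Import all_boot all_order all_algebra.
From mathcomp Require Import all_classical all_reals all_analysis.
From mathcomp Require Import ring lra.
Import Order.TTheory GRing.Theory Num.Theory.
Import numFieldNormedType.Exports.
Local Open Scope ring_scope.

Section H1.
Variable R : realType.

Lemma mvt_sign (f df : R -> R) (a b : R) : a < b ->
  (forall x : R, is_derive x 1 f (df x)) ->
  exists2 c, a < c < b & f b - f a = df c * (b - a).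
Proof.
move=> ab D.
have [c cin E] := MVT ab (fun x _ => D x) (derivable_within_continuous (fun z _ => @ex_derive _ _ _ _ _ _ _ (D z))).
by exists c => //; move: cin; rewrite in_itv.
Qed.

Lemma lip_deriv (g dg : R -> R) (M : R) :
  (forall x : R, is_derive x 1 g (dg x)) -> (forall x, `|dg x| <= M) ->
  forall u v, `|g v - g u| <= M * `|v - u|.
Proof.
move=> D B u v.
have M0 : 0 <= M by apply: le_trans (B 0); exact: normr_ge0.
case: (ltgtP u v) => [uv|vu|->]; last by rewrite !subrr normr0 mulr0.
- have [c _ ->] := mvt_sign _ _ _ _ uv D.
  by rewrite normrM ler_wpM2r // normr_ge0.
- have [c _ E] := mvt_sign _ _ _ _ vu D.
  by rewrite -normrN opprB E -(normrN (v - u)) opprB normrM ler_wpM2r // normr_ge0.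
Qed.

Lemma taylor_side (phi phi' phi'' : R -> R) (H s u h : R) :
  (forall x : R, is_derive x 1 phi (phi' x)) ->
  (forall x : R, is_derive x 1 phi' (phi'' x)) ->
  (forall x, `|phi'' x| <= H) -> `|s| <= 1 ->
  s * (phi (u + h) - phi u - phi' u * h) <= H / 2 * h ^+ 2.
Proof.
move=> D1 D2 B hs.
have H0 : 0 <= H by apply: le_trans (B 0); exact: normr_ge0.
pose F := fun v : R => s * (phi v - phi u - phi' u * (v - u)) - H / 2 * (v - u) ^+ 2.
pose dF := fun v : R => s * (phi' v - phi' u) - H * (v - u).
have DF : forall v : R, is_derive v 1 F (dF v).
  move=> v; rewrite /F /dF; apply: is_derive_eq.
  have E : forall a b : R, a *: b = a * b by [].
  by rewrite !subr0 !E; field.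
have L := lip_deriv _ _ _ D2 B.
have bd : forall v, `|s * (phi' v - phi' u)| <= H * `|v - u|.
  move=> w; rewrite normrM; apply: le_trans (L u w).
  by rewrite -[X in _ <= X]mul1r ler_wpM2r // normr_ge0.
have Fu : F u = 0 by rewrite /F; ring.
suff : F (u + h) <= 0.
  by rewrite /F (addrC u h) addrK subr_le0 (addrC h u).
case: (ltgtP h 0) => [hn|hp|->].
- have ab : u + h < u by lra.
  have [c /andP[c1 c2] E] := mvt_sign _ _ _ _ ab DF.
  have : 0 <= dF c.
    rewrite /dF; have := bd c.
    have -> : `|c - u| = u - c by rewrite ltr0_norm ?subr_lt0 // opprB.
    rewrite ler_norml => /andP[h1 h2]; lra.
  move: E; rewrite Fu; nra.
- have ab : u < u + h by lra.
  have [c /andP[c1 c2] E] := mvt_sign _ _ _ _ ab DF.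
  have : dF c <= 0.
    rewrite /dF; have := bd c.
    have -> : `|c - u| = c - u by rewrite gtr0_norm ?subr_gt0.
    rewrite ler_norml => /andP[h1 h2]; lra.
  move: E; rewrite Fu; nra.
- by rewrite addr0 Fu.
Qed.

Lemma taylor2 (phi phi' phi'' : R -> R) (H u h : R) :
  (forall x : R, is_derive x 1 phi (phi' x)) ->
  (forall x : R, is_derive x 1 phi' (phi'' x)) ->
  (forall x, `|phi'' x| <= H) ->
  `|phi (u + h) - phi u - phi' u * h| <= H / 2 * h ^+ 2.
Proof.
move=> D1 D2 B; apply/ler_normlP; split.
- rewrite -mulN1r; apply: (taylor_side _ _ _ _ _ _ _ D1 D2 B); by rewrite normrN normr1.
- rewrite -[X in X <= _]mul1r; apply: (taylor_side _ _ _ _ _ _ _ D1 D2 B); by rewrite normr1.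
Qed.

Lemma deriv_le1 (phi phi' phi'' : R -> R) (H : R) :
  (forall x : R, is_derive x 1 phi (phi' x)) ->
  (forall x : R, is_derive x 1 phi' (phi'' x)) ->
  (forall x, `|phi'' x| <= H) ->
  (forall u v : R, `|phi u - phi v| <= `|u - v|) ->
  forall u, `|phi' u| <= 1.
Proof.
move=> D1 D2 B Lip u.
have H0 : 0 <= H by apply: le_trans (B 0); exact: normr_ge0.
apply/ler_addgt0Pr; move=> e e0.
pose h := e / (H + 1).
have H1 : 0 < H + 1 by lra.
have h0 : 0 < h by rewrite /h divr_gt0.
have T := taylor2 _ _ _ _ u h D1 D2 B.
have L := Lip (u + h) u.
rewrite addrAC subrr add0r (gtr0_norm h0) in L.
have T2 : `|phi' u * h| <= h + H / 2 * h ^+ 2.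
  have -> : phi' u * h = (phi (u + h) - phi u) - (phi (u + h) - phi u - phi' u * h) by ring.
  apply: le_trans (ler_normB _ _) _; exact: lerD L T.
rewrite normrM (gtr0_norm h0) in T2.
have he : h * (H + 1) = e by rewrite /h divfK // gt_eqF.
have T3 : `|phi' u| <= 1 + H / 2 * h.
  rewrite -(ler_pM2r h0) mulrDl mul1r; apply: le_trans T2 _; by rewrite expr2 mulrA.
have : H / 2 * h <= e by rewrite -he; nra.
lra.
Qed.

End H1.


Section H2.
Variable R : realType.

Lemma dotv_ge0 d (u : 'I_d -> R) : 0 <= dotv u u.
Proof. by apply: sumr_ge0 => k _; rewrite -expr2 sqr_ge0. Qed.

Lemma vnorm_sq d (u : 'I_d -> R) : vnorm u ^+ 2 = dotv u u.
Proof. by rewrite /vnorm sqr_sqrtr // dotv_ge0. Qed.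

Lemma dotv_bound d (u v : 'I_d -> R) : `|dotv u v| <= (dotv u u + dotv v v) / 2.
Proof.
rewrite /dotv -big_split /= mulr_suml.
apply: le_trans (ler_norm_sum _ _ _) _.
apply: ler_sum => k _.
rewrite normrM.
have := sqr_ge0 (`|u k| - `|v k|).
rewrite -[u k * u k]expr2 -[v k * v k]expr2 -(real_normK (num_real (u k))) -(real_normK (num_real (v k))).
move=> h; lra.
Qed.

Lemma frob_grad m d (a : 'I_m -> R) (p' : R -> R) (W : 'M[R]_(m, d)) (x1 x2 : 'I_d -> R) :
  frob (gradf a p' W x1) (gradf a p' W x2) =
  \sum_(j < m) a j ^+ 2 * p' (dotv (fun l => W j l) x1) * p' (dotv (fun l => W j l) x2) * dotv x1 x2.
Proof.
apply: eq_bigr => j _; rewrite /dotv mulr_sumr; apply: eq_bigr => k _; rewrite !mxE; ring.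
Qed.

End H2.

Lemma dotvE (R : realType) d (u v : 'I_d -> R) : dotv u v = \sum_(k < d) u k * v k.
Proof. by []. Qed.


Section H3.
Variable R : realType.

Lemma net_lin n m d (a : 'I_m -> R) (p' : R -> R) (x : 'I_n -> 'I_d -> R)
  (b : 'I_n -> R) (W : 'M[R]_(m, d)) (i : 'I_n) :
  forall D : 'M[R]_(m, d), (forall j l, D j l = \sum_(k < n) b k * (a j * p' (dotv (fun l0 => W j l0) (x k)) * x k l)) ->
  \sum_(j < m) a j * p' (dotv (fun l => W j l) (x i)) * dotv (fun l => D j l) (x i)
  = \sum_(k < n) b k * frob (gradf a p' W (x i)) (gradf a p' W (x k)).
Proof.
move=> D DE.
under [RHS]eq_bigr do rewrite frob_grad mulr_sumr.
rewrite exchange_big; apply: eq_bigr => j _.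
have -> : dotv (fun l => D j l) (x i) = \sum_(l < d) (\sum_(k < n) b k * (a j * p' (dotv (fun l0 => W j l0) (x k)) * x k l)) * x i l.
  by apply: eq_bigr => l _; rewrite DE.
rewrite mulr_sumr.
under [LHS]eq_bigr do rewrite mulr_suml mulr_sumr.
rewrite exchange_big; apply: eq_bigr => k _.
rewrite dotvE mulr_sumr mulr_sumr; apply: eq_bigr => l _; ring.
Qed.

Lemma h_bound n m d (a : 'I_m -> R) (p' : R -> R) (x : 'I_n -> 'I_d -> R)
  (b : 'I_n -> R) (W : 'M[R]_(m, d)) (i : 'I_n) (M : R) (j : 'I_m) :
  (forall u, `|p' u| <= 1) -> (forall k, `|dotv (x k) (x i)| <= M) ->
  forall D : 'M[R]_(m, d), (forall j l, D j l = \sum_(k < n) b k * (a j * p' (dotv (fun l0 => W j l0) (x k)) * x k l)) ->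
  `|dotv (fun l => D j l) (x i)| <= `|a j| * ((\sum_(k < n) `|b k|) * M).
Proof.
move=> P1 XM D DE.
have -> : dotv (fun l => D j l) (x i) =
   \sum_(k < n) b k * a j * p' (dotv (fun l0 => W j l0) (x k)) * dotv (x k) (x i).
  rewrite [LHS](_ : _ = \sum_(l < d) (\sum_(k < n) b k * (a j * p' (dotv (fun l0 => W j l0) (x k)) * x k l)) * x i l); last by apply: eq_bigr => l _; rewrite DE.
  under [LHS]eq_bigr do rewrite mulr_suml.
  rewrite exchange_big; apply: eq_bigr => k _; rewrite dotvE mulr_sumr; apply: eq_bigr => l _; ring.
rewrite mulr_suml mulr_sumr; apply: le_trans (ler_norm_sum _ _ _) _.
apply: ler_sum => k _.
rewrite !normrM.
have h1 := P1 (dotv (fun l0 => W j l0) (x k)).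
have h2 := XM k.
have := normr_ge0 (a j); have := normr_ge0 (b k);
have := normr_ge0 (p' (dotv (fun l0 => W j l0) (x k))); have := normr_ge0 (dotv (x k) (x i)).
set A := `|a j|; set B := `|b k|; set P := `|p' _|; set X := `|dotv _ _|.
move=> X0 P0 B0 A0.
have PX : P * X <= M.
  apply: le_trans h2; rewrite -[X in _ <= X]mul1r; exact: ler_wpM2r.
rewrite -!mulrA mulrCA; apply: ler_wpM2l => //; exact: ler_wpM2l.
Qed.

End H3.


Section H4.
Variable R : realType.

Lemma net_taylor n m d (a : 'I_m -> R) (phi phi' phi'' : R -> R) (H M : R)
  (x : 'I_n -> 'I_d -> R) (b : 'I_n -> R) (W : 'M[R]_(m, d)) (i : 'I_n)
  (D : 'M[R]_(m, d)) :
  (forall j l, D j l = \sum_(k < n) b k * (a j * phi' (dotv (fun l0 => W j l0) (x k)) * x k l)) ->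
  (forall j, a j ^+ 2 = m%:R^-1) ->
  (forall x : R, is_derive x 1 phi (phi' x)) ->
  (forall x : R, is_derive x 1 phi' (phi'' x)) ->
  (forall x, `|phi'' x| <= H) ->
  (forall u, `|phi' u| <= 1) -> (forall k, `|dotv (x k) (x i)| <= M) ->
  `|netf a phi (W + D) (x i) - netf a phi W (x i)
     - \sum_(k < n) b k * frob (gradf a phi' W (x i)) (gradf a phi' W (x k))|
  <= H / 2 * ((\sum_(k < n) `|b k|) * M) ^+ 2.
Proof.
move=> DE A2 D1 D2 B P1 XM.
have H0 : 0 <= H by apply: le_trans (B 0); exact: normr_ge0.
rewrite -(@net_lin R n m d a phi' x b W i D DE).
set S := (\sum_(k < n) `|b k|) * M.
have e1 : forall j, dotv (fun l => (W + D) j l) (x i) =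
    dotv (fun l => W j l) (x i) + dotv (fun l => D j l) (x i).
  by move=> j; rewrite !dotvE -big_split; apply: eq_bigr => l _; rewrite mxE mulrDl.
have -> : netf a phi (W + D) (x i) - netf a phi W (x i)
   - \sum_(j < m) a j * phi' (dotv (fun l => W j l) (x i)) * dotv (fun l => D j l) (x i)
   = \sum_(j < m) a j * (phi (dotv (fun l => W j l) (x i) + dotv (fun l => D j l) (x i))
        - phi (dotv (fun l => W j l) (x i))
        - phi' (dotv (fun l => W j l) (x i)) * dotv (fun l => D j l) (x i)).
  rewrite /netf -!sumrB; apply: eq_bigr => j _; rewrite e1; ring.
apply: le_trans (ler_norm_sum _ _ _) _.
have aj1 : forall j, `|a j| ^+ 2 = m%:R^-1 by move=> j; rewrite real_normK ?num_real.
have step : forall j, `|a j * (phi (dotv (fun l => W j l) (x i) + dotv (fun l => D j l) (x i))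
        - phi (dotv (fun l => W j l) (x i))
        - phi' (dotv (fun l => W j l) (x i)) * dotv (fun l => D j l) (x i))|
     <= H / 2 * S ^+ 2 * (`|a j| * m%:R^-1).
  move=> j; rewrite normrM.
  have T := @taylor2 R _ _ _ _ (dotv (fun l => W j l) (x i)) (dotv (fun l => D j l) (x i)) D1 D2 B.
  have hb := @h_bound R n m d a phi' x b W i M j P1 XM D DE.
  set h := dotv (fun l => D j l) (x i) in T hb *.
  have h2 : h ^+ 2 <= (`|a j| * S) ^+ 2.
    rewrite -real_normK ?num_real // !expr2; exact: (ler_pM (normr_ge0 h) (normr_ge0 h) hb hb).
  have aS : H / 2 * h ^+ 2 <= H / 2 * (`|a j| * S) ^+ 2 by apply: ler_wpM2l => //; lra.
  rewrite -(aj1 j).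
  have := normr_ge0 (a j).
  set A := `|a j|. move=> A0.
  apply: le_trans (ler_wpM2l A0 (le_trans T aS)) _.
  rewrite le_eqVlt; apply/orP; left; apply/eqP; rewrite exprMn /A; ring.
apply: le_trans (ler_sum _ (fun j _ => step j)) _.
rewrite -mulr_sumr -[X in _ <= X]mulr1; apply: ler_wpM2l.
  by apply: mulr_ge0; [lra | exact: sqr_ge0].
rewrite -mulr_suml.
case: m a A2 D W DE {e1 step aj1} => [|m'] a' A2' D' W' DE'.
  by rewrite big_ord0 mul0r.
have a1 : forall j, `|a' j| <= 1.
  move=> j; have := A2' j; rewrite -real_normK ?num_real // => e.
  have : m'.+1%:R^-1 <= (1 : R) by rewrite invf_le1 // ?ler1n // ltr0n.
  rewrite -e; have := normr_ge0 (a' j); nra.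
apply: le_trans (ler_wpM2r _ (ler_sum _ (fun j _ => a1 j))) _.
  by rewrite invr_ge0 ler0n.
by rewrite sumr_const card_ord -mulr_natl mulfV // pnatr_eq0.
Qed.

End H4.


Section H5.
Variable R : realType.

Lemma le_bigmaxR n (F : 'I_n -> R) (P : pred 'I_n) k :
  P k -> F k <= \big[Num.max/0]_(i < n | P i) F i.
Proof. by move=> Pk; rewrite (bigD1 k) //= le_max lexx. Qed.

Lemma bigmaxR_ge0 n (F : 'I_n -> R) (P : pred 'I_n) :
  0 <= \big[Num.max/0]_(i < n | P i) F i.
Proof. by elim/big_rec: _ => // i v _ hv; rewrite le_max hv orbT. Qed.

Lemma bigminR_le n (F : 'I_n -> R) z k : \big[Num.min/z]_(i < n) F i <= F k.
Proof. by rewrite (bigD1 k) //= ge_min lexx. Qed.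

Lemma bigminR_gt0 n (F : 'I_n -> R) z :
  0 < z -> (forall i, 0 < F i) -> 0 < \big[Num.min/z]_(i < n) F i.
Proof.
move=> z0 F0; apply: (big_ind (fun v => 0 < v)) => // u v hu hv.
by rewrite lt_min hu hv.
Qed.

Lemma frob_self m d (a : 'I_m -> R) (p' : R -> R) (W : 'M[R]_(m, d)) (x1 : 'I_d -> R) :
  (forall j, a j ^+ 2 = m%:R^-1) -> (forall u, `|p' u| <= 1) ->
  frob (gradf a p' W x1) (gradf a p' W x1) <= vnorm x1 ^+ 2.
Proof.
move=> A2 P1; rewrite frob_grad vnorm_sq.
have D0 := @dotv_ge0 R d x1.
apply: le_trans (_ : \sum_(j < m) m%:R^-1 * dotv x1 x1 <= _).
  apply: ler_sum => j _; rewrite A2.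
  have m0 : 0 <= (m%:R : R)^-1 by rewrite invr_ge0 ler0n.
  have pp : p' (dotv (fun l => W j l) x1) * p' (dotv (fun l => W j l) x1) <= 1.
    rewrite -expr2 -real_normK ?num_real // expr2.
    have := P1 (dotv (fun l => W j l) x1); have := normr_ge0 (p' (dotv (fun l => W j l) x1)); nra.
  rewrite -mulrA -mulrA; apply: ler_wpM2l => //.
  rewrite mulrA -[X in _ <= X]mul1r; apply: ler_wpM2r => //.
rewrite sumr_const card_ord.
case: m a A2 W => [|m'] a A2 W; first by rewrite mulr0n.
rewrite -[X in X <= _]mulr_natl mulrA mulfV ?mul1r // pnatr_eq0.
Qed.

Lemma a_sq m (a : 'I_m -> R) :
  (forall j, a j = (Num.sqrt m%:R)^-1 \/ a j = - (Num.sqrt m%:R)^-1) ->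
  forall j, a j ^+ 2 = m%:R^-1.
Proof.
move=> ha j; have e : ((Num.sqrt (m%:R : R))^-1) ^+ 2 = m%:R^-1.
  by rewrite exprVn sqr_sqrtr // ler0n.
by case: (ha j) => ->; rewrite ?sqrrN.
Qed.

Lemma gsig_bounds (z : R) : 0 < gsig z /\ gsig z <= 1.
Proof.
rewrite /gsig; have := expR_gt0 z => e; split.
  by rewrite invr_gt0; lra.
by rewrite invf_le1; lra.
Qed.

End H5.


Lemma final_arith (R : realType) (al N c H C' Rmax Rmin Rr GH Mi Mj Fii Fjj gi gj Li Lj fi fj fi' fj' E : R) :
  0 < al -> 0 < N -> 0 < c -> 0 <= H -> 0 < Rmin -> Rr = Rmax / Rmin ->
  0 < gi -> 0 < gj -> 0 <= GH -> GH <= 1 -> 0 <= Mi -> 0 <= Mj ->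
  E = H / 2 * ((al * GH) * Rmax ^+ 2) ^+ 2 ->
  25 * Rr ^+ 2 / c + 25 <= C' ->
  C' * N * Mi <= Fii -> C' * N * Mj <= Fjj ->
  Fii <= Rmax ^+ 2 -> Fjj <= Rmax ^+ 2 -> c * Rmin ^+ 2 <= Fii ->
  al / N * (gi * Fii) - al * GH * Mi <= Li ->
  Lj <= al / N * (gj * Fjj) + al * GH * Mj ->
  fi + Li - E <= fi' -> fj' <= fj + Lj + E ->
  al * (5 * H * Rmax ^+ 2 * N * (10 * Rr ^+ 2 / c + 10)) <= 1 ->
  - fi' - - fj' <= - fi - - fj + - (gj * al * c * Rmin ^+ 2 / N) * (gi / gj - Rr ^+ 2 / c)
     + al * Rmax ^+ 2 / ((10 * Rr ^+ 2 / c + 10) * N) * GH.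
Proof.
move=> al0 N0 c0 H0 Rmin0 hRr gi0 gj0 GH0 GH1 Mi0 Mj0 hE hC' NOi NOj Fi1 Fj1 Fic Li1 Lj1 fi1 fj1 hal.
set K := 10 * Rr ^+ 2 / c + 10.
have K0 : 0 < K.
  rewrite /K; have : 0 <= Rr ^+ 2 / c by rewrite divr_ge0 ?sqr_ge0 // ltW.
  lra.
have KN0 : 0 < K * N by rewrite mulr_gt0.
set X := al * Rmax ^+ 2 / (K * N) * GH.
have XKN : X * (K * N) = al * GH * Rmax ^+ 2.
  by rewrite /X; field; rewrite !gt_eqF.
have T1E : - (gj * al * c * Rmin ^+ 2 / N) * (gi / gj - Rr ^+ 2 / c)
    = - (al / N * (gi * (c * Rmin ^+ 2))) + al / N * (gj * Rmax ^+ 2).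
  by rewrite hRr; field; rewrite ?gt_eqF.

rewrite T1E.
have C'K : 5 / 2 * K <= C' by rewrite /K; lra.
have NM0 : 0 <= N * Mi by rewrite mulr_ge0 // ltW.
have NMj0 : 0 <= N * Mj by rewrite mulr_ge0 // ltW.
have a1 : 5 / 2 * K * (N * Mi) <= Rmax ^+ 2.
  have : 5 / 2 * K * (N * Mi) <= C' * (N * Mi) by apply: ler_wpM2r.
  rewrite mulrA; lra.
have a1j : 5 / 2 * K * (N * Mj) <= Rmax ^+ 2.
  have : 5 / 2 * K * (N * Mj) <= C' * (N * Mj) by apply: ler_wpM2r.
  rewrite mulrA; lra.
have aG0 : 0 <= al * GH by rewrite mulr_ge0 // ltW.
have Mi' : al * GH * Mi <= 2 / 5 * X.
  rewrite -(ler_pM2r KN0).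
  have : al * GH * (5 / 2 * K * (N * Mi)) <= al * GH * Rmax ^+ 2 by apply: ler_wpM2l.
  have -> : 2 / 5 * X * (K * N) = 2 / 5 * (X * (K * N)) by ring.
  rewrite XKN.
  have -> : al * GH * Mi * (K * N) = 2 / 5 * (al * GH * (5 / 2 * K * (N * Mi))) by field.
  lra.
have Mj' : al * GH * Mj <= 2 / 5 * X.
  rewrite -(ler_pM2r KN0).
  have : al * GH * (5 / 2 * K * (N * Mj)) <= al * GH * Rmax ^+ 2 by apply: ler_wpM2l.
  have -> : 2 / 5 * X * (K * N) = 2 / 5 * (X * (K * N)) by ring.
  rewrite XKN.
  have -> : al * GH * Mj * (K * N) = 2 / 5 * (al * GH * (5 / 2 * K * (N * Mj))) by field.
  lra.
have E' : 2 * E <= X / 5.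
  have Q0 : 0 <= al * GH * Rmax ^+ 2 by rewrite mulr_ge0 // sqr_ge0.
  have HR0 : 0 <= H * al * Rmax ^+ 2 by rewrite mulr_ge0 ?sqr_ge0 // mulr_ge0 // ltW.
  have b1 : H * al * Rmax ^+ 2 * GH <= H * al * Rmax ^+ 2.
    by rewrite -[X in _ <= X]mulr1; apply: ler_wpM2l.
  have b2 : H * al * Rmax ^+ 2 * (5 * (K * N)) <= 1.
    by move: hal; rewrite /K; have -> : H * al * Rmax ^+ 2 * (5 * ((10 * Rr ^+ 2 / c + 10) * N)) = al * (5 * H * Rmax ^+ 2 * N * (10 * Rr ^+ 2 / c + 10)) by ring.
  have -> : 2 * E = (al * GH * Rmax ^+ 2) * (H * al * Rmax ^+ 2 * GH) by rewrite hE; field.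
  rewrite -(ler_pM2r KN0).
  have -> : X / 5 * (K * N) = (al * GH * Rmax ^+ 2) / 5 by rewrite -XKN; field.
  have b3 : (H * al * Rmax ^+ 2 * GH) * (K * N) <= 1 / 5.
    have b4 : (H * al * Rmax ^+ 2 * GH) * (K * N) <= H * al * Rmax ^+ 2 * (K * N).
      by apply: ler_wpM2r => //; exact: ltW.
    lra.
  have -> : al * GH * Rmax ^+ 2 * (H * al * Rmax ^+ 2 * GH) * (K * N)
      = al * GH * Rmax ^+ 2 * ((H * al * Rmax ^+ 2 * GH) * (K * N)) by ring.
  have := ler_wpM2l Q0 b3; lra.
have Lj2 : al / N * (gj * Fjj) <= al / N * (gj * Rmax ^+ 2).
  apply: ler_wpM2l; first by rewrite divr_ge0 // ltW.
  by apply: ler_wpM2l => //; exact: ltW.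
have Li2 : al / N * (gi * (c * Rmin ^+ 2)) <= al / N * (gi * Fii).
  apply: ler_wpM2l; first by rewrite divr_ge0 // ltW.
  by apply: ler_wpM2l => //; exact: ltW.
lra.
Qed.



Theorem mainTheorem9 (R : realType) (n m d : nat)
  (x : 'I_n -> 'I_d -> R) (y : 'I_n -> R) (a : 'I_m -> R)
  (phi phi' phi'' : R -> R) (H c C' alpha : R) (W : 'M[R]_(m, d)) :
  (0 < n)%N -> (0 < m)%N ->
  (forall i, y i = 1 \/ y i = -1) ->
  (forall j, a j = (Num.sqrt m%:R)^-1 \/ a j = - (Num.sqrt m%:R)^-1) ->
  (forall i, 0 < vnorm (x i)) ->
  (* phi is 1-Lipschitz, twice differentiable with |phi''| <= H *)
  (forall u v : R, `|phi u - phi v| <= `|u - v|) ->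
  (forall u : R, is_derive u 1 phi (phi' u)) ->
  (forall u : R, is_derive u 1 phi' (phi'' u)) ->
  (forall u : R, `|phi'' u| <= H) ->
  let Rr := Rmaxx x / Rminx x in
  0 < c ->
  25 * Rr ^+ 2 / c + 25 <= C' ->
  (* near-orthogonality of gradients with constant C' *)
  (forall i : 'I_n,
     C' * n%:R * \big[Num.max/0]_(k < n | k != i)
        `|frob (gradf a phi' W (x i)) (gradf a phi' W (x k))|
     <= frob (gradf a phi' W (x i)) (gradf a phi' W (x i))) ->
  (* gradient persistence with constant c *)
  (forall i : 'I_n,
     c * vnorm (x i) ^+ 2 <= frob (gradf a phi' W (x i)) (gradf a phi' W (x i))) ->
  0 < alpha ->
  (* alpha <= [5 H Rmax^2 n (10R^2/c+10)]^-1, written multiplicatively so H = 0 means no constraint *)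
  alpha * (5 * H * Rmaxx x ^+ 2 * n%:R * (10 * Rr ^+ 2 / c + 10)) <= 1 ->
  let W' := gd_step a phi phi' x y alpha W in
  let gg := fun i => gsig (y i * netf a phi W (x i)) in
  forall i j : 'I_n,
    expR (- (y i * netf a phi W' (x i))) / expR (- (y j * netf a phi W' (x j)))
    <= expR (- (y i * netf a phi W (x i))) / expR (- (y j * netf a phi W (x j)))
       * expR (- (gg j * alpha * c * Rminx x ^+ 2 / n%:R)
                 * (gg i / gg j - Rr ^+ 2 / c))
       * expR (alpha * Rmaxx x ^+ 2 / ((10 * Rr ^+ 2 / c + 10) * n%:R)
                 * Ghat a phi x y W).
Proof.
move=> n0 m0 hy ha hx Lip D1 D2 B Rr c0 hC' NO GP al0 hal W' gg i j.
have H0 : 0 <= H by apply: le_trans (B 0); exact: normr_ge0.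
have P1 := @deriv_le1 R phi phi' phi'' H D1 D2 B Lip.
have A2 := @a_sq R m a ha.
set N := (n%:R : R).
have N0 : 0 < N by rewrite ltr0n.
have vmax : forall k, vnorm (x k) <= Rmaxx x.
  by move=> k; rewrite /Rmaxx (bigD1 k) //= le_max lexx.
have Rmax0 : 0 < Rmaxx x := lt_le_trans (hx (Ordinal n0)) (vmax _).
have vmin : forall k, Rminx x <= vnorm (x k).
  by move=> k; rewrite /Rminx; apply: bigminR_le.
have Rmin0 : 0 < Rminx x by rewrite /Rminx; apply: bigminR_gt0.
have gg0 : forall k, 0 < gg k by move=> k; case: (@gsig_bounds R (y k * netf a phi W (x k))).
have gg1 : forall k, gg k <= 1 by move=> k; case: (@gsig_bounds R (y k * netf a phi W (x k))).
have ny : forall k, `|y k| = 1 by move=> k; case: (hy k) => ->; rewrite ?normrN normr1.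
have yy : forall k, y k * y k = 1 by move=> k; case: (hy k) => ->; rewrite ?mulrNN mulr1.
pose F := fun l k => frob (gradf a phi' W (x l)) (gradf a phi' W (x k)).
have vn0 : forall k, 0 <= vnorm (x k) by move=> k; exact: sqrtr_ge0.
have vsq : forall k, vnorm (x k) ^+ 2 <= Rmaxx x ^+ 2.
  by move=> k; rewrite !expr2; apply: ler_pM => //; exact: vmax.
have Fself : forall k, F k k <= Rmaxx x ^+ 2.
  by move=> k; apply: le_trans (vsq k); exact: frob_self.
have XM : forall l k, `|dotv (x k) (x l)| <= Rmaxx x ^+ 2.
  move=> l k; apply: le_trans (@dotv_bound R d _ _) _.
  rewrite -!vnorm_sq; have := vsq k; have := vsq l; lra.
have Fic : c * Rminx x ^+ 2 <= F i i.
  apply: le_trans (GP i); apply: ler_wpM2l; first exact: ltW.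
  rewrite !expr2; apply: ler_pM; by [exact: ltW | exact: vmin].
pose GH := Ghat a phi x y W.
have GHE : GH = N^-1 * \sum_(k < n) gg k by [].
have GH0 : 0 <= GH by rewrite GHE mulr_ge0 ?invr_ge0 ?ler0n // sumr_ge0 // => k _; exact: ltW.
have GH1 : GH <= 1.
  rewrite GHE; have : \sum_(k < n) gg k <= N.
    apply: le_trans (ler_sum _ (fun k _ => gg1 k)) _.
    by rewrite sumr_const card_ord.
  move=> h; rewrite -(mulVf (lt0r_neq0 N0)); apply: ler_wpM2l => //.
  by rewrite invr_ge0 ltW.
pose b := fun k => alpha / N * (gg k * y k).
have aN0 : 0 < alpha / N by rewrite divr_gt0.
have Sb : \sum_(k < n) `|b k| = alpha * GH.
  transitivity (\sum_(k < n) alpha / N * gg k).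
    by apply: eq_bigr => k _; rewrite /b normrM (gtr0_norm aN0) normrM ny mulr1 (gtr0_norm (gg0 k)).
  by rewrite -mulr_sumr GHE; ring.
pose Lin := fun l => \sum_(k < n) b k * F l k.
pose E := H / 2 * ((alpha * GH) * Rmaxx x ^+ 2) ^+ 2.
have ST : forall l, `|netf a phi W' (x l) - netf a phi W (x l) - Lin l| <= E.
  move=> l.
  have DE : forall j0 l0, ((alpha / n%:R) *: \sum_(k < n) (gsig (y k * netf a phi W (x k)) * y k) *: gradf a phi' W (x k)) j0 l0
     = \sum_(k < n) b k * (a j0 * phi' (dotv (fun l1 => W j0 l1) (x k)) * x k l0).
    move=> j0 l0; rewrite !mxE summxE mulr_sumr; apply: eq_bigr => k _.
    by rewrite !mxE /b /gg; ring.
  have := @net_taylor R n m d a phi phi' phi'' H (Rmaxx x ^+ 2) x b W l _ DE A2 D1 D2 B P1 (XM l).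
  by rewrite Sb.
pose M := fun l => \big[Num.max/0]_(k < n | k != l) `|F l k|.
have yL : forall l, `|y l * Lin l - alpha / N * (gg l * F l l)| <= alpha * GH * M l.
  move=> l.
  have LinE : y l * Lin l = alpha / N * (gg l * F l l)
      + alpha / N * \sum_(k < n | k != l) gg k * (y l * y k * F l k).
    rewrite /Lin mulr_sumr (bigD1 l) //=; congr (_ + _).
      transitivity ((alpha / N * (gg l * F l l)) * (y l * y l)); first by rewrite /b; ring.
      by rewrite yy mulr1.
    by rewrite mulr_sumr; apply: eq_bigr => k _; rewrite /b; ring.
  rewrite LinE addrAC subrr add0r normrM (gtr0_norm aN0).
  have -> : alpha * GH * M l = alpha / N * ((\sum_(k < n) gg k) * M l) by rewrite GHE; ring.
  apply: ler_wpM2l; first exact: ltW.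
  apply: le_trans (ler_norm_sum _ _ _) _.
  apply: le_trans (_ : \sum_(k < n | k != l) gg k * M l <= _).
    apply: ler_sum => k kl.
    rewrite normrM normrM normrM ny ny !mul1r (gtr0_norm (gg0 k)).
    apply: ler_wpM2l; first exact: ltW.
    exact: (@le_bigmaxR R n (fun k => `|F l k|) (fun k => k != l) k kl).
  rewrite mulr_suml [X in _ <= X](bigD1 l) //=.
  have : 0 <= gg l * M l by rewrite mulr_ge0 // ?bigmaxR_ge0 // ltW.
  lra.
have STy : forall l, `|y l * netf a phi W' (x l) - y l * netf a phi W (x l) - y l * Lin l| <= E.
  by move=> l; rewrite -!mulrBr normrM ny mul1r; exact: ST.
have fi1 : y i * netf a phi W (x i) + y i * Lin i - E <= y i * netf a phi W' (x i).
  by have := STy i; rewrite ler_norml => /andP[h1 h2]; lra.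
have fj1 : y j * netf a phi W' (x j) <= y j * netf a phi W (x j) + y j * Lin j + E.
  by have := STy j; rewrite ler_norml => /andP[h1 h2]; lra.
have Li1 : alpha / N * (gg i * F i i) - alpha * GH * M i <= y i * Lin i.
  by have := yL i; rewrite ler_norml => /andP[h1 h2]; lra.
have Lj1 : y j * Lin j <= alpha / N * (gg j * F j j) + alpha * GH * M j.
  by have := yL j; rewrite ler_norml => /andP[h1 h2]; lra.
rewrite -!expRB -!expRD ler_expR.
exact: (@final_arith R _ _ _ _ _ _ _ _ _ _ _ _ _ _ _ _ _ _ _ _ _ _ al0 N0 c0 H0 Rmin0 erefl (gg0 i) (gg0 j) GH0 GH1
  (@bigmaxR_ge0 R n _ _) (@bigmaxR_ge0 R n _ _) erefl hC' (NO i) (NO j) (Fself i) (Fself j) Fic Li1 Lj1 fi1 fj1 hal).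
Qed.
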